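(* Consider the nonatomic game with tolls, with cost densities $\bar c_{lj}(\mathbf{m})=g_{lj}c(m_j)+\gamma_l\sum_{i=1}^L m_{ij}g_{ij}c'(m_j)$, and suppose $h_{lj}=h_j$ for all $l\in\mathcal{L}$, $j\in\mathcal{N}$. Then every Nash equilibrium of this game is system optimal, i.e., minimizes $C(\mathbf{m})=\sum_{j\in\mathcal{N}}\sum_{l=1}^L m_{lj}g_{lj}c(m_j)$ over all congestion profiles.
   Context: Nonatomic model: classes $\mathcal{L}=\{1,\dots,L\}$ of nonatomic mobiles, class $l$ having total mass $M_l>0$, target SINR density $\gamma_l>0$ and power gain $h_{lj}>0$ to BS $j\in\mathcal{N}=\{1,\dots,N\}$; noise power $\sigma^2>0$. A congestion profile is $\mathbf{m}=(m_{lj})$ with $m_{lj}\ge0$, $\sum_j m_{lj}=M_l$. Set $m_j=\sum_l\gamma_l m_{lj}$, $g_{lj}=\gamma_l\sigma^2/h_{lj}$, $c(z)=1/(1-z)$ for $z<1$ and $c(z)=\infty$ for $z\ge1$, $c'(z)=1/(1-z)^2$ for $z<1$ and $c'(z)=\infty$ for $z\ge1$. $\mathbf{m}$ is a Nash equilibrium if for all $l,j$, $m_{lj}>0$ implies $\bar c_{lj}(\mathbf{m})\le \bar c_{lk}(\mathbf{m})$ for all $k$. Standing feasibility assumption: $\sum_l\gamma_l M_l<N$. *)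

(* Defs.v *)
From HB Require Import structures.
From mathcomp Require Import all_boot all_order all_algebra.
From mathcomp Require Import all_classical all_reals ereal.
Set Implicit Arguments. Unset Strict Implicit. Unset Printing Implicit Defensive.
Import Order.TTheory GRing.Theory Num.Theory.
Local Open Scope ring_scope.
Local Open Scope ereal_scope.

Section Model.
Context {R : realType} {L N : nat}.

Definition cE (z : R) : \bar R :=
  if (z < 1)%R then ((1 - z)^-1)%:E else +oo.

Definition dcE (z : R) : \bar R :=
  if (z < 1)%R then (((1 - z) ^+ 2)^-1)%:E else +oo.

Definition gcoef (gamma : 'I_L -> R) (sigma2 : R) (h : 'I_L -> 'I_N -> R)
  (l : 'I_L) (j : 'I_N) : R := (gamma l * sigma2 / h l j)%R.

Definition is_profile (M : 'I_L -> R) (m : 'I_L -> 'I_N -> R) : Prop :=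
  (forall l j, (0 <= m l j)%R) /\ (forall l, (\sum_(j < N) m l j)%R = M l).

Definition load (gamma : 'I_L -> R) (m : 'I_L -> 'I_N -> R) (j : 'I_N) : R :=
  (\sum_(l < L) gamma l * m l j)%R.

(* toll cost density
   cbar_{lj}(m) = g_{lj} c(m_j) + gamma_l sum_i m_{ij} g_{ij} c'(m_j)
   (extended-real arithmetic, with the convention 0 * (+oo) = 0) *)
Definition cbar (gamma : 'I_L -> R) (sigma2 : R) (h : 'I_L -> 'I_N -> R)
  (m : 'I_L -> 'I_N -> R) (l : 'I_L) (j : 'I_N) : \bar R :=
  (gcoef gamma sigma2 h l j)%:E * cE (load gamma m j)
  + (gamma l)%:E *
    (\sum_(i < L) (m i j * gcoef gamma sigma2 h i j)%:E * dcE (load gamma m j)).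

Definition is_NE (M : 'I_L -> R) (gamma : 'I_L -> R) (sigma2 : R)
  (h : 'I_L -> 'I_N -> R) (m : 'I_L -> 'I_N -> R) : Prop :=
  is_profile M m /\
  forall l j, (0 < m l j)%R ->
    forall k, cbar gamma sigma2 h m l j <= cbar gamma sigma2 h m l k.

Definition Csoc (gamma : 'I_L -> R) (sigma2 : R) (h : 'I_L -> 'I_N -> R)
  (m : 'I_L -> 'I_N -> R) : \bar R :=
  \sum_(j < N) \sum_(l < L)
     (m l j * gcoef gamma sigma2 h l j)%:E * cE (load gamma m j).

End Model.

(* Main.v *)
Require Import Defs.
From HB Require Import structures.
From mathcomp Require Import all_boot all_order all_algebra.
From mathcomp Require Import all_classical all_reals ereal.
From mathcomp Require Import ring lra.
Import Order.TTheory GRing.Theory Num.Theory.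
Local Open Scope ring_scope.
Local Open Scope ereal_scope.

Lemma conv_ineq (R : realType) (x y : R) : (0 <= x)%R -> (x < 1)%R -> (y < 1)%R ->
  (((1-x)^-1 + x*((1-x)^+2)^-1) * (y - x) <= y/(1-y) - x/(1-x))%R.
Proof.
move=> x0 x1 y1.
have u0 : (0 < 1 - x)%R by rewrite subr_gt0.
have v0 : (0 < 1 - y)%R by rewrite subr_gt0.
rewrite -subr_ge0.
have -> : (y / (1 - y) - x / (1 - x) - ((1 - x)^-1 + x * ((1 - x) ^+ 2)^-1) * (y - x)
   = (y - x)^+2 / ((1-x)^+2 * (1-y)))%R.
  by field; rewrite ?mulf_neq0 ?expf_neq0 // ?lt0r_neq0.
by apply: divr_ge0; rewrite ?sqr_ge0 // mulr_ge0 // ?sqr_ge0 // ltW.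
Qed.

Lemma cE_lt (R : realType) (z : R) : (z < 1)%R -> cE z = ((1 - z)^-1)%:E.
Proof. by move=> h; rewrite /cE h. Qed.
Lemma cE_ge (R : realType) (z : R) : ~~ (z < 1)%R -> cE z = +oo.
Proof. by move=> h; rewrite /cE (negbTE h). Qed.
Lemma dcE_lt (R : realType) (z : R) : (z < 1)%R -> dcE z = (((1 - z)^+2)^-1)%:E.
Proof. by move=> h; rewrite /dcE h. Qed.
Lemma cE_ge0 (R : realType) (z : R) : 0 <= cE z.
Proof.
rewrite /cE; case: ifP => h; last exact: leey.
by rewrite lee_fin invr_ge0 ltW // subr_gt0.
Qed.
Lemma dcE_ge0 (R : realType) (z : R) : 0 <= dcE z.
Proof.
rewrite /dcE; case: ifP => h; last exact: leey.
by rewrite lee_fin invr_ge0 ltW // exprn_gt0 // subr_gt0.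
Qed.

Lemma ge0_nninf (R : realType) (x : \bar R) : 0 <= x -> x != -oo.
Proof. by case: x. Qed.

Theorem proposition13 (R : realType) (L N : nat)
  (M gamma : 'I_L -> R) (h : 'I_L -> 'I_N -> R) (sigma2 : R)
  (hM : forall l, (0 < M l)%R) (hgamma : forall l, (0 < gamma l)%R)
  (hh : forall l j, (0 < h l j)%R) (hsigma : (0 < sigma2)%R)
  (hfeas : (\sum_(l < L) gamma l * M l < N%:R)%R)
  (hN : 'I_N -> R) (hcommon : forall l j, h l j = hN j)
  (m : 'I_L -> 'I_N -> R) :
  is_NE M gamma sigma2 h m ->
  forall m' : 'I_L -> 'I_N -> R, is_profile M m' ->
    Csoc gamma sigma2 h m <= Csoc gamma sigma2 h m'.
Proof.
move=> [[m0 mM] hNE] m' [m'0 m'M].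
have [L0|Lpos] := eqVneq L 0%N.
  rewrite /Csoc !big1 // => j _; apply: big1 => l _; have := ltn_ord l; by rewrite {2}L0.
have Lp : (0 < L)%N by rewrite lt0n.
pose l0 : 'I_L := Ordinal Lp.
pose a j := (sigma2 / hN j)%R.
have a0 : forall j, (0 < a j)%R.
  by move=> j; rewrite /a divr_gt0 // -(hcommon l0).
have hg : forall l j, gcoef gamma sigma2 h l j = (gamma l * a j)%R.
  by move=> l j; rewrite /gcoef hcommon mulrA.
have g0 : forall l j, (0 < gcoef gamma sigma2 h l j)%R.
  by move=> l j; rewrite hg mulr_gt0.
have load0 : forall p : 'I_L -> 'I_N -> R, (forall l j, 0 <= p l j)%R ->
    forall j, (0 <= load gamma p j)%R.
  by move=> p p0 j; apply: sumr_ge0 => l _; rewrite mulr_ge0 // ltW.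
have hsum : forall p : 'I_L -> 'I_N -> R, (forall l, \sum_(j < N) p l j = M l)%R ->
    (\sum_(j < N) load gamma p j = \sum_(l < L) gamma l * M l)%R.
  move=> p pM; rewrite /load exchange_big; apply: eq_bigr => l _.
  by rewrite -mulr_sumr pM.
have posex : forall p : 'I_L -> 'I_N -> R, (forall l j, 0 <= p l j)%R ->
    forall j, ~~ (load gamma p j < 1)%R -> exists l, (0 < p l j)%R.
  move=> p p0 j hj; case/boolP: [exists l, (0 < p l j)%R] => [/existsP //|].
  move/existsPn => hn; exfalso; move: hj; apply/negP; apply/negPn.
  apply: (@le_lt_trans _ _ 0%R); last exact: ltr01.
  apply: sumr_le0 => l _; apply: mulr_ge0_le0; first exact: ltW.
  by rewrite leNgt hn.
have hmg : forall p : 'I_L -> 'I_N -> R, forall j,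
    (\sum_(l < L) p l j * gcoef gamma sigma2 h l j = a j * load gamma p j)%R.
  move=> p j; rewrite /load mulr_sumr; apply: eq_bigr => l _; rewrite hg; ring.
have hCfin : forall p : 'I_L -> 'I_N -> R, (forall j, load gamma p j < 1)%R ->
    Csoc gamma sigma2 h p =
    (\sum_(j < N) a j * load gamma p j * (1 - load gamma p j)^-1)%:E.
  move=> p hp; rewrite /Csoc -sumEFin; apply: eq_bigr => j _.
  rewrite cE_lt //; under eq_bigr do rewrite -EFinM.
  by rewrite sumEFin -mulr_suml hmg.
pose e k := (a k * ((1 - load gamma m k)^-1 +
   load gamma m k * ((1 - load gamma m k)^+2)^-1))%R.
have cbar_fin : forall l k, (load gamma m k < 1)%R ->
    cbar gamma sigma2 h m l k = (gamma l * e k)%:E.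
  move=> l k hk; rewrite /cbar cE_lt // dcE_lt //.
  under eq_bigr do rewrite -EFinM.
  rewrite sumEFin -!EFinM -EFinD; congr EFin.
  rewrite -mulr_suml hmg hg /e; ring.
have cbar_inf : forall l j, ~~ (load gamma m j < 1)%R -> (0 < m l j)%R ->
    cbar gamma sigma2 h m l j = +oo.
  move=> l j hj hm; rewrite /cbar cE_ge // gt0_muley ?lte_fin // addye //.
  apply: ge0_nninf; apply: mule_ge0; first by rewrite lee_fin ltW.
  apply: sume_ge0 => i _; apply: mule_ge0; last exact: dcE_ge0.
  by rewrite lee_fin mulr_ge0 // ltW.
have hz : forall j, (load gamma m j < 1)%R.
  move=> j; apply/negPn/negP => hj.
  have hall : forall k, ~~ (load gamma m k < 1)%R.
    move=> k; apply/negP => hk.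
    have [l hl] := posex m m0 j hj.
    have := hNE l j hl k; rewrite cbar_inf // cbar_fin //.
  move: hfeas; apply/negP; rewrite -leNgt -(hsum m mM).
  have -> : (N%:R = \sum_(k < N) (1 : R))%R by rewrite sumr_const card_ord.
  by apply: ler_sum => k _; rewrite leNgt hall.
have hNEe : forall l j k, (0 < m l j)%R -> (e j <= e k)%R.
  move=> l j k hm; have := hNE l j hm k; rewrite !cbar_fin // lee_fin.
  by rewrite ler_pM2l.
case/boolP: [forall j, (load gamma m' j < 1)%R] => [/forallP hz'|].
  rewrite (hCfin m hz) (hCfin m' hz') lee_fin -subr_ge0 -sumrB.
  apply: (@le_trans _ _ (\sum_(j < N) e j * (load gamma m' j - load gamma m j))%R); last first.
    apply: ler_sum => j _.
    have -> : (a j * load gamma m' j * (1 - load gamma m' j)^-1 -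
       a j * load gamma m j * (1 - load gamma m j)^-1 =
       a j * (load gamma m' j / (1 - load gamma m' j) -
              load gamma m j / (1 - load gamma m j)))%R by ring.
    rewrite /e -mulrA; apply: ler_wpM2l; first exact: ltW.
    by apply: conv_ineq => //; apply: load0.
  have -> : (\sum_(j < N) e j * (load gamma m' j - load gamma m j) =
     \sum_(l < L) gamma l * (\sum_(j < N) e j * m' l j - \sum_(j < N) e j * m l j))%R.
    rewrite /load.
    under eq_bigr do rewrite -sumrB mulr_sumr.
    rewrite exchange_big; apply: eq_bigr => l _.
    rewrite -sumrB mulr_sumr; apply: eq_bigr => j _; ring.
  apply: sumr_ge0 => l _; apply: mulr_ge0; first exact: ltW.
  rewrite subr_ge0.
  have [j0 hj0] : exists j0, (0 < m l j0)%R.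
    case/boolP: [exists j, (0 < m l j)%R] => [/existsP //|].
    move/existsPn => hn; exfalso; have := hM l; apply/negP; rewrite -leNgt -mM.
    by apply: sumr_le0 => j _; rewrite leNgt hn.
  have -> : (\sum_(j < N) e j * m l j = e j0 * M l)%R.
    rewrite -mM mulr_sumr; apply: eq_bigr => j _.
    have [hp|hn] := ltP 0%R (m l j).
      by rewrite (_ : e j = e j0) //; apply: le_anti; rewrite !(hNEe l).
    have -> : m l j = 0%R by apply: le_anti; rewrite hn m0.
    by rewrite !mulr0.
  rewrite -m'M mulr_sumr; apply: ler_sum => j _.
  by apply: ler_wpM2r; [exact: m'0 | exact: (hNEe l)].
move/forallPn => [j0 hj0].
have -> : Csoc gamma sigma2 h m' = +oo; last exact: leey.
have [l hl] := posex m' m'0 j0 hj0.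
rewrite /Csoc (bigD1 j0) //= (bigD1 l) //= cE_ge // gt0_muley; last first.
  by rewrite lte_fin mulr_gt0.
rewrite addye; last first.
  apply: ge0_nninf; apply: sume_ge0 => i _.
  apply: mule_ge0; last exact: leey.
  by rewrite lee_fin mulr_ge0 // ltW.
rewrite addye //; apply: ge0_nninf; apply: sume_ge0 => k _.
apply: sume_ge0 => i _; apply: mule_ge0; last exact: cE_ge0.
by rewrite lee_fin mulr_ge0 // ltW.
Qed.
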